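(* The average-case quantum query complexity of the Search problem under the uniform distribution on $\{0,\dots,m-1\}^n$ satisfies $Q_{\mathcal U}(\mathrm{Search})\ge\sqrt{m/15}-\sqrt{1/5}$.
   Context: Let $m\ge2$, $\Sigma=\{0,\dots,m-1\}$. The Search problem: given $x\in\Sigma^n$, output an index $i\in\{1,\dots,n\}$ with $x_i=1$. Query model: the algorithm space has orthonormal basis $|i,b\rangle$, $i\in\{1,\dots,n\}$, $b\in\Sigma$; the oracle is $O_x|i,b\rangle=|i,b+x_i\bmod m\rangle$ (equivalently the phase oracle $|i,b\rangle\mapsto e^{2\pi\mathbf i bx_i/m}|i,b\rangle$). A memoryless $T$-query algorithm is a sequence of unitaries $U_0,\dots,U_T$ on this space with final state $U_TO_x\cdots U_1O_xU_0|\mathrm{init}\rangle$ for a fixed basis state $|\mathrm{init}\rangle$; its output is the index obtained by measuring the index register of the final state. $Q_{\mathcal U}(\mathrm{Search})$ is the smallest $T$ such that some $T$-query algorithm, on input $x$ drawn uniformly from $\Sigma^n$, outputs an $i$ with $x_i=1$ with probability at least $2/3$ (probability over both $x$ and the measurement). *)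

(* Defs.v *)
From mathcomp Require Import all_boot all_algebra.
From mathcomp Require Import reals.
From mathcomp.real_closed Require Import complex.
Set Implicit Arguments. Unset Strict Implicit. Unset Printing Implicit Defensive.
Import GRing.Theory Num.Theory.
Local Open Scope ring_scope.

(* Basis labels |i,b> of the algorithm space: i in {1..n} (as 'I_n), b in Sigma = 'I_m. *)
Definition Idx (n m : nat) : finType := ('I_n * 'I_m)%type.

Section Query.
Variables (R : realType) (n m : nat).
Local Notation C := (R[i]).
Local Notation I := (Idx n m).

(* Operators on the space C^(n*m): matrices indexed by basis labels,
   entry U a c = <a|U|c>. *)
Definition op := I -> I -> C.
Definition state := I -> C.

Definition apply_op (U : op) (v : state) : state := fun a => \sum_(c : I) U a c * v c.

(* U is unitary: U^dagger U = Id (equivalent to unitarity in finite dimension). *)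
Definition unitary (U : op) : Prop :=
  forall a c : I, \sum_(k : I) (U k a)^* * U k c = (a == c)%:R.

Lemma addmod_proof (b c : 'I_m) : ((b + c) %% m < m)%N.
Proof. by rewrite ltn_pmod // (leq_ltn_trans (leq0n b) (ltn_ord b)). Qed.
Definition addmod (b c : 'I_m) : 'I_m := Ordinal (addmod_proof b c).

Definition oracle_map (x : {ffun 'I_n -> 'I_m}) (a : I) : I := (a.1, addmod a.2 (x a.1)).
Definition oracle (x : {ffun 'I_n -> 'I_m}) : op :=
  fun a c => (a == oracle_map x c)%:R.

Definition basis_state (a0 : I) : state := fun a => (a == a0)%:R.

Fixpoint run (Us : nat -> op) (x : {ffun 'I_n -> 'I_m}) (init : I) (k : nat) : state :=
  match k with
  | 0 => apply_op (Us 0%N) (basis_state init)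
  | k'.+1 => apply_op (Us k) (apply_op (oracle x) (run Us x init k'))
  end.

Definition normsq (z : C) : R := complex.Re z ^+ 2 + complex.Im z ^+ 2.

(* probability that measuring the index register of the final state of the
   T-query algorithm yields an i with x_i = 1 *)
Definition success_prob (T : nat) (Us : nat -> op) (init : I) (x : {ffun 'I_n -> 'I_m}) : R :=
  \sum_(a : I | nat_of_ord (x a.1) == 1%N) normsq (run Us x init T a).

Definition avg_success (T : nat) (Us : nat -> op) (init : I) : R :=
  (#|{ffun 'I_n -> 'I_m}|%:R)^-1 * \sum_(x : {ffun 'I_n -> 'I_m}) success_prob T Us init x.

Definition solves_search_avg (T : nat) : Prop :=
  exists (Us : nat -> op) (init : I),
    (forall k, (k <= T)%N -> unitary (Us k)) /\ 2 / 3 <= avg_success T Us init.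

End Query.

(* Main.v *)
Require Import Defs.
From mathcomp Require Import all_boot all_order all_algebra all_fingroup.
From mathcomp Require Import reals.
From mathcomp.real_closed Require Import complex.
From mathcomp Require Import ring lra.
Import Order.TTheory GRing.Theory Num.Theory.
Local Open Scope ring_scope.
Local Notation "x %:C" := (real_complex _ x) (format "x %:C").

Section Aux.
Variables (R : realType) (n m : nat).
Local Notation C := (R[i]).
Local Notation I := (Idx n m).
Local Notation st := (state R n m).

Definition nsq (v : st) : R := \sum_a normsq (v a).
Definition blk (i : 'I_n) (v : st) : R := \sum_(a : I | a.1 == i) normsq (v a).

Lemma normsq_ge0 (z : C) : 0 <= normsq z.
Proof. by rewrite /normsq addr_ge0 ?sqr_ge0. Qed.

Lemma normsqC (z : C) : (normsq z)%:C = z * z^*.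
Proof. by rewrite /normsq add_Re2_Im2 normCK. Qed.

Lemma ineq2 (a c l : R) : 0 < l -> 2 * a * c <= l * a ^+ 2 + l^-1 * c ^+ 2.
Proof.
move=> l0; have k0 : 0 < l^-1 by rewrite invr_gt0.
have h : 0 <= l^-1 * (l * a - c) ^+ 2 by apply: mulr_ge0; [exact: ltW | exact: sqr_ge0].
have -> : l * a ^+ 2 + l^-1 * c ^+ 2 = l^-1 * (l * a - c) ^+ 2 + 2 * a * c.
  rewrite sqrrB; field.
  by rewrite lt0r_neq0.
by rewrite lerDr.
Qed.

Lemma normsq_add (z w : C) (l : R) : 0 < l ->
  normsq (z + w) <= (1 + l) * normsq z + (1 + l^-1) * normsq w.
Proof.
move=> l0; case: z => a b; case: w => c d; rewrite /normsq /=.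
have h1 := ineq2 a c l l0; have h2 := ineq2 b d l l0.
have -> : (1 + l) * (a ^+ 2 + b ^+ 2) + (1 + l^-1) * (c ^+ 2 + d ^+ 2) =
   (a+c)^+2 + (b+d)^+2 + ((l * a ^+ 2 + l^-1 * c ^+ 2) - 2 * a * c)
   + ((l * b ^+ 2 + l^-1 * d ^+ 2) - 2 * b * d) by ring.
by rewrite -addrA lerDl addr_ge0 // subr_ge0.
Qed.

Lemma normsqN (z : C) : normsq (- z) = normsq z.
Proof. by case: z => a b; rewrite /normsq /= !sqrrN. Qed.

Lemma normsq0 : normsq (0 : C) = 0.
Proof. by rewrite /normsq /= expr0n /= addr0. Qed.

Lemma normsq_sub (z w : C) : normsq (z - w) <= 2 * normsq z + 2 * normsq w.
Proof.
have := @normsq_add z (- w) 1 ltr01; rewrite invr1 normsqN.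
by have -> : (1 + 1 : R) = 2 by [].
Qed.


Lemma nsq_ge0 (v : st) : 0 <= nsq v.
Proof. by apply: sumr_ge0 => a _; exact: normsq_ge0. Qed.

Lemma nsq_ext (v w : st) : v =1 w -> nsq v = nsq w.
Proof. by move=> e; apply: eq_bigr => a _; rewrite e. Qed.

Lemma nsq_add (v w : st) (l : R) : 0 < l ->
  nsq (fun a => v a + w a) <= (1 + l) * nsq v + (1 + l^-1) * nsq w.
Proof.
move=> l0; rewrite /nsq !mulr_sumr -big_split /=.
by apply: ler_sum => a _; exact: normsq_add.
Qed.

Lemma sum_blk (v : st) : \sum_i blk i v = nsq v.
Proof.
by rewrite /nsq (partition_big (fun a : I => a.1) predT).
Qed.

Lemma blk_le (v : st) i : blk i v <= nsq v.
Proof.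
rewrite /nsq (bigID (fun a : I => a.1 == i)) /= lerDl.
by apply: sumr_ge0 => a _; exact: normsq_ge0.
Qed.

Lemma nsq_unitary (U : op R n m) (v : st) : unitary U -> nsq (apply_op U v) = nsq v.
Proof.
move=> hU; apply: (@complexI R).
rewrite /nsq !raddf_sum /=.
under eq_bigr do rewrite normsqC.
under [RHS]eq_bigr do rewrite normsqC.
transitivity (\sum_a \sum_c \sum_d ((U a c * v c) * ((U a d)^* * (v d)^*))).
  apply: eq_bigr => a _; rewrite /apply_op rmorph_sum mulr_suml.
  apply: eq_bigr => c _; rewrite mulr_sumr.
  by apply: eq_bigr => d _; rewrite rmorphM.
rewrite exchange_big; apply: eq_bigr => c _; rewrite exchange_big /=.
transitivity (\sum_d ((v c * (v d)^*) * \sum_a (U a d)^* * U a c)).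
  apply: eq_bigr => d _; rewrite mulr_sumr; apply: eq_bigr => a _.
  by rewrite !mulrA; ring.
under eq_bigr do rewrite hU.
rewrite (bigD1 c) //= eqxx mulr1 big1 ?addr0 // => d /negbTE hd.
by rewrite hd mulr0.
Qed.

Lemma omap_inj (x : {ffun 'I_n -> 'I_m}) : injective (oracle_map x).
Proof.
move=> [i b] [j c] e; case: e => eij; subst j.
move/eqP; rewrite eqn_modDr !modn_small // => /eqP e.
by congr (_, _); apply: val_inj.
Qed.

Lemma app_omap x (v : st) c : apply_op (oracle R x) v (oracle_map x c) = v c.
Proof.
rewrite /apply_op /oracle (bigD1 c) //= eqxx mul1r big1 ?addr0 // => d hd.
by rewrite (inj_eq (@omap_inj x)) eq_sym (negbTE hd) mul0r.
Qed.

Lemma nsq_oracle x (v : st) : nsq (apply_op (oracle R x) v) = nsq v.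
Proof.
rewrite /nsq (reindex_inj (@omap_inj x)).
by apply: eq_bigr => a _; rewrite app_omap.
Qed.

Lemma blk_oracle x (v : st) i : blk i (apply_op (oracle R x) v) = blk i v.
Proof.
rewrite /blk (reindex_inj (@omap_inj x)) /=.
by apply: eq_bigr => a _; rewrite app_omap.
Qed.

Definition upd (x : {ffun 'I_n -> 'I_m}) (i : 'I_n) (c : 'I_m) : {ffun 'I_n -> 'I_m} :=
  [ffun j => if j == i then c else x j].

Lemma oracle_upd_out x i c (v : st) (a : I) : a.1 != i ->
  apply_op (oracle R (upd x i c)) v a = apply_op (oracle R x) v a.
Proof.
move=> ha; rewrite /apply_op /oracle; apply: eq_bigr => d _.
case: (eqVneq d.1 i) => hd.
  have h1 : forall y, (a == oracle_map y d) = false.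
    by move=> y; apply/negbTE; apply: contra_neq ha => ->.
  by rewrite !h1.
by rewrite /oracle_map /upd ffunE (negbTE hd).
Qed.

Lemma oracle_diff x i c (v : st) :
  nsq (fun a => apply_op (oracle R (upd x i c)) v a - apply_op (oracle R x) v a)
  <= 4 * blk i v.
Proof.
rewrite /nsq (bigID (fun a : I => a.1 == i)) /=.
rewrite [X in _ + X]big1 ?addr0; last first.
  by move=> a ha; rewrite oracle_upd_out // subrr normsq0.
apply: le_trans (_ : \sum_(a | a.1 == i)
   (2 * normsq (apply_op (oracle R (upd x i c)) v a)
    + 2 * normsq (apply_op (oracle R x) v a)) <= _).
  by apply: ler_sum => a _; exact: normsq_sub.
rewrite big_split /= -!mulr_sumr.
have e1 := blk_oracle (upd x i c) v i; have e2 := blk_oracle x v i.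
rewrite /blk in e1 e2; rewrite e1 e2.
rewrite -/(blk i v); lra.
Qed.

Lemma apply_opB (U : op R n m) (v w : st) a :
  apply_op U v a - apply_op U w a = apply_op U (fun b => v b - w b) a.
Proof. by rewrite /apply_op -sumrB; apply: eq_bigr => b _; rewrite mulrBr. Qed.


Lemma nsq_basis (a0 : I) : nsq (basis_state R a0) = 1.
Proof.
rewrite /nsq (bigD1 a0) //= /basis_state eqxx big1 ?addr0.
  by rewrite /normsq /= expr0n /= addr0 expr1n.
by move=> a /negbTE ->; rewrite normsq0.
Qed.

Lemma nsq_run (Us : nat -> op R n m) x init k :
  (forall j, (j <= k)%N -> unitary (Us j)) -> nsq (run Us x init k) = 1.
Proof.
elim: k => [|k IH] hU /=.
  by rewrite nsq_unitary; [apply: nsq_basis | exact: hU].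
rewrite nsq_unitary; last exact: hU.
rewrite nsq_oracle IH // => j hj; apply: hU; exact: leqW.
Qed.

Definition Ediff (Us : nat -> op R n m) x y init t : st := fun a =>
  apply_op (oracle R y) (run Us x init t) a - apply_op (oracle R x) (run Us x init t) a.

Lemma hybrid (Us : nat -> op R n m) x y init k :
  (forall j, (j <= k)%N -> unitary (Us j)) ->
  nsq (fun a => run Us y init k a - run Us x init k a)
    <= k%:R * \sum_(t < k) nsq (Ediff Us x y init t).
Proof.
elim: k => [|k IH] hU.
  rewrite big_ord0 mulr0 /nsq big1 // => a _ /=.
  by rewrite subrr normsq0.
have e : nsq (fun a => run Us y init k.+1 a - run Us x init k.+1 a) =
   nsq (fun a => apply_op (oracle R y) (fun b => run Us y init k b - run Us x init k b) a
                 + Ediff Us x y init k a).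
  transitivity (nsq (apply_op (Us k.+1) (fun b =>
     apply_op (oracle R y) (run Us y init k) b - apply_op (oracle R x) (run Us x init k) b))).
    by apply: nsq_ext => a; rewrite /= apply_opB.
  rewrite nsq_unitary; last exact: hU.
  apply: nsq_ext => a.
  by rewrite /Ediff -apply_opB addrA subrK.
rewrite e big_ord_recr /=.
have IH' := IH (fun j hj => hU j (leqW hj)).
clear IH; move: IH' e hU; case: k => [|k] IH' e hU.
  rewrite big_ord0 add0r mul1r; rewrite le_eqVlt; apply/orP; left; apply/eqP; apply: nsq_ext => a.
  rewrite /apply_op big1 ?add0r // => b _; by rewrite /= subrr mulr0.
have k0 : 0 < (k.+1%:R : R)^-1 by rewrite invr_gt0 ltr0Sn.
set Dv := apply_op (oracle R y) _.
apply: le_trans (nsq_add Dv (Ediff Us x y init k.+1) (k.+1%:R^-1) k0) _. rewrite /Dv.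
rewrite invrK nsq_oracle.
set D := nsq _ in IH' *; set S := \sum_(t < k.+1) _ in IH' *.
set E := nsq (Ediff _ _ _ _ _).
have hE : 0 <= E by exact: nsq_ge0.
have h1 : (1 + (k.+1%:R)^-1) * D <= (1 + (k.+1%:R)^-1) * (k.+1%:R * S).
  by apply: ler_wpM2l => //; rewrite addr_ge0 // ltW.
have h2 : (1 + (k.+1%:R : R)^-1) * (k.+1%:R * S) = k.+2%:R * S.
  rewrite mulrDl mul1r mulrA mulVf ?mul1r; last by rewrite pnatr_eq0.
  by rewrite [k.+2%:R]mulrSr mulrDl mul1r.
have h3 : (1 + k.+1%:R : R) = k.+2%:R by rewrite [k.+2%:R]mulrSr addrC.
rewrite h3 mulrDr; apply: lerD => //; by rewrite -h2.
Qed.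


Lemma count_upd (G : {ffun 'I_n -> 'I_m} -> R) (i : 'I_n) (one : 'I_m) :
  \sum_(x : {ffun 'I_n -> 'I_m}) G (upd x i one) = m%:R * \sum_(x : {ffun 'I_n -> 'I_m} | x i == one) G x.
Proof.
rewrite (partition_big (fun x : {ffun 'I_n -> 'I_m} => x i) predT) //=.
transitivity (\sum_(c : 'I_m) \sum_(x : {ffun 'I_n -> 'I_m} | x i == one) G x).
  apply: eq_bigr => c _.
  pose h := fun x : {ffun 'I_n -> 'I_m} =>
    [ffun j => if j == i then tperm c one (x j) else x j].
  have hK : involutive h.
    move=> x; apply/ffunP => j; rewrite !ffunE.
    by case: (eqVneq j i) => //= _; rewrite tpermK.
  rewrite (reindex_inj (inv_inj hK)) /=.
  have key : forall x, (h x i == c) = (x i == one).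
    move=> x; rewrite /h ffunE eqxx.
    apply/eqP/eqP => [h1|->]; last by rewrite tpermR.
    by rewrite -(tpermK c one (x i)) h1 tpermL.
  apply: eq_big => x; first exact: key.
  rewrite key => /eqP hx; congr G; apply/ffunP => j; rewrite /upd /h !ffunE.
  by case: (eqVneq j i) => // ->; rewrite hx.
by rewrite sumr_const card_ord mulr_natl.
Qed.


Lemma main_ineq (one : 'I_m) (h1 : nat_of_ord one = 1%N) T (Us : nat -> op R n m) init :
  (forall k, (k <= T)%N -> unitary (Us k)) -> 2 / 3 <= avg_success T Us init ->
  2 / 3 * m%:R <= 4 * T%:R ^+ 2 + 4 * T%:R + 2 :> R.
Proof.
move=> hU hs.
set N := (#|{ffun 'I_n -> 'I_m}|%:R : R).
set S := \sum_x success_prob T Us init x.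
have hs' : 2 / 3 <= N^-1 * S := hs.
have hS : m%:R * S = \sum_x \sum_(a : I) normsq (run Us (upd x a.1 one) init T a).
  rewrite /S /success_prob.
  under eq_bigr do rewrite big_mkcond /=.
  rewrite exchange_big /= mulr_sumr.
  transitivity (\sum_(a : I) \sum_x normsq (run Us (upd x a.1 one) init T a));
    last by rewrite exchange_big.
  apply: eq_bigr => a _.
  rewrite (count_upd (fun x => normsq (run Us x init T a)) a.1 one) /=.
  congr (_ * _); rewrite [RHS]big_mkcond /=; apply: eq_bigr => x _.
  have -> : (x a.1 == one) = (nat_of_ord (x a.1) == 1%N) by rewrite -h1.
  by [].
set l := (2 * T%:R + 1 : R).
have l0 : 0 < l by rewrite /l ltr_pwDr // mulr_ge0.
set K := (1 + l) + (1 + l^-1) * (4 * T%:R ^+ 2).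
have hx : forall x, \sum_(a : I) normsq (run Us (upd x a.1 one) init T a) <= K.
  move=> x.
  set ps := run Us x init T.
  apply: le_trans (_ : \sum_(a : I) ((1 + l) * normsq (ps a)
      + (1 + l^-1) * normsq (run Us (upd x a.1 one) init T a - ps a)) <= _).
    apply: ler_sum => a _.
    have e : ps a + (run Us (upd x a.1 one) init T a - ps a) = run Us (upd x a.1 one) init T a.
      by rewrite addrC subrK.
    by have := normsq_add (ps a) (run Us (upd x a.1 one) init T a - ps a) l l0; rewrite e.
  rewrite big_split /= -!mulr_sumr.
  change (\sum_a normsq (ps a)) with (nsq ps).
  rewrite nsq_run // mulr1.
  have hD : \sum_(a : I) normsq (run Us (upd x a.1 one) init T a - ps a) <= 4 * T%:R ^+ 2.
    rewrite (partition_big (fun a : I => a.1) predT) //=.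
    apply: le_trans (_ : \sum_(i : 'I_n) nsq (fun a => run Us (upd x i one) init T a - ps a) <= _).
      apply: ler_sum => i _.
      apply: le_trans (_ : blk i (fun a => run Us (upd x i one) init T a - ps a) <= _); last exact: blk_le.
      rewrite /blk le_eqVlt; apply/orP; left; apply/eqP.
      by apply: eq_big => [a|a /eqP ->] //.
    apply: le_trans (_ : \sum_(i : 'I_n) T%:R * \sum_(t < T) 4 * blk i (run Us x init t) <= _).
      apply: ler_sum => i _.
      apply: le_trans (hybrid Us x (upd x i one) init T hU) _.
      apply: ler_wpM2l => //; apply: ler_sum => t _.
      exact: oracle_diff.
    have e : forall t : 'I_T, \sum_i 4 * blk i (run Us x init t) = 4.
      move=> t; rewrite -mulr_sumr sum_blk nsq_run ?mulr1 // => j hj; apply: hU.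
      exact: leq_trans hj (ltnW (ltn_ord t)).
    rewrite -mulr_sumr exchange_big /=.
    under eq_bigr do rewrite e.
    rewrite sumr_const card_ord -mulr_natr; nra.
  apply: lerD => //; apply: ler_wpM2l => //.
  by rewrite addr_ge0 // ltW // invr_gt0.
have hsum : m%:R * S <= N * K.
  rewrite hS; apply: le_trans (ler_sum _ (fun x _ => hx x)) _.
  by rewrite sumr_const -mulr_natl.
have N0 : 0 < N.
  rewrite lt0r ler0n andbT; apply/eqP => N0.
  by move: hs'; rewrite N0 invr0 mul0r; lra.
have e : N * (N^-1 * S) = S by rewrite mulrA mulfV ?mul1r // lt0r_neq0.
have h2 : N * (2 / 3 * m%:R) <= N * K.
  apply: le_trans hsum.
  have hh : 2 / 3 * N <= S.
    rewrite -e; nra.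
  have hm0 : 0 <= (m%:R : R) by [].
  nra.
rewrite ler_pM2l // in h2.
have hl : l^-1 * (4 * T%:R ^+ 2) <= 2 * T%:R.
  have hT0 : 0 <= (T%:R : R) by [].
  rewrite mulrC ler_pdivrMr // /l; nra.
rewrite /K in h2; move: h2 hl; rewrite /l; lra.
Qed.

End Aux.

Theorem proposition4p9 (R : realType) (n m : nat) (hm : (2 <= m)%N) (T : nat) :
  solves_search_avg R n m T ->
  Num.sqrt (m%:R / 15 : R) - Num.sqrt (1 / 5 : R) <= T%:R.
Proof.
move=> [Us [init [hU hs]]].
have hq := @main_ineq R n m (Ordinal hm) erefl T Us init hU hs.
set s := Num.sqrt (1 / 5 : R).
have s0 : 0 <= s by exact: sqrtr_ge0.
have ss : s ^+ 2 = 1 / 5 by rewrite sqr_sqrtr // divr_ge0.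
have hT0 : 0 <= (T%:R : R) by [].
have hT : (T%:R : R) <= T%:R ^+ 2.
  by case: T {hU hs hq} hT0 => [|k] _; rewrite ?expr0n // -natrX ler_nat expnS expn1 leq_pmulr.
have hTs : 0 <= (T%:R : R) + s by rewrite addr_ge0.
rewrite lerBlDr -(ger0_norm hTs) -sqrtr_sqr ler_sqrt ?sqr_ge0 //.
have hm0 : 0 <= (m%:R : R) by [].
nra.
Qed.
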